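(* Let $\mathcal{D}$ be a distribution on $[n]$, $\varepsilon>0$, and $T$ any binary search tree on $[n]$. There is a monotonicity tester for functions $f:[n]\to\mathbb{R}$ with respect to $\mathcal{D}$ with proximity parameter $\varepsilon$ that makes at most $24\,\varepsilon^{-1}\Delta(T;\mathcal{D})$ queries.
   Context: A binary search tree (BST) on $[n]$ has nodes labeled bijectively by $[n]$ with left descendants smaller and right descendants larger; $\mathrm{depth}_T(v)$ is the number of edges from $v$ to the root, and $\Delta(T;\mathcal{D})=\mathbb{E}_{v\sim\mathcal{D}}[\mathrm{depth}_T(v)]$. $f$ is monotone if $f(x)\le f(y)$ for $x\le y$. A monotonicity tester w.r.t. $\mathcal{D}$ with proximity parameter $\varepsilon$ accepts monotone $f$ with probability $>2/3$ and rejects with probability $>2/3$ any $f$ with $\min_{g\text{ monotone}}\Pr_{x\sim\mathcal{D}}[f(x)\ne g(x)]>\varepsilon$. *)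

(* Defs.v *)
From mathcomp Require Import all_boot all_order all_algebra.
From mathcomp Require Import reals.
Set Implicit Arguments. Unset Strict Implicit. Unset Printing Implicit Defensive.
Import Order.TTheory GRing.Theory Num.Theory.
Local Open Scope ring_scope.

(* [n] = {1,..,n} is represented by 'I_n = {0,..,n-1} (shift by one). *)
Inductive btree : Type :=
| Leaf : btree
| Node : btree -> nat -> btree -> btree.

Fixpoint keys (t : btree) : seq nat :=
  match t with
  | Leaf => [::]
  | Node l k r => keys l ++ k :: keys r
  end.

(* T is a BST on {0,..,n-1}: its in-order traversal lists every label
   exactly once, in increasing order; this says the labels are a bijection
   with {0,..,n-1} and that left descendants are smaller and right
   descendants larger. *)
Definition is_bst (n : nat) (t : btree) : Prop := keys t = iota 0 n.

(* number of edges from the node labelled v to the root (v assumed in t) *)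
Fixpoint depth (t : btree) (v : nat) : nat :=
  match t with
  | Leaf => 0
  | Node l k r =>
      if v == k then 0%N
      else if v \in keys l then (depth l v).+1 else (depth r v).+1
  end.

Definition is_distr (R : realType) (T : finType) (D : T -> R) : Prop :=
  (forall x, 0 <= D x) /\ \sum_(x : T) D x = 1.

Definition Delta (R : realType) (n : nat) (t : btree) (D : 'I_n -> R) : R :=
  \sum_(v : 'I_n) D v * (depth t v)%:R.

Definition monotone (R : realType) (n : nat) (f : 'I_n -> R) : Prop :=
  forall x y : 'I_n, (x <= y)%N -> f x <= f y.

Definition disagree (R : realType) (n : nat) (D : 'I_n -> R) (f g : 'I_n -> R) : R :=
  \sum_(x : 'I_n | f x != g x) D x.

(* min_{g monotone} Pr_D[f <> g] > eps  (the minimum is attained, since the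
   disagreement probability takes finitely many values) *)
Definition far (R : realType) (n : nat) (D : 'I_n -> R) (eps : R) (f : 'I_n -> R) : Prop :=
  forall g : 'I_n -> R, monotone g -> eps < disagree D f g.

(* A deterministic adaptive query algorithm for f : 'I_n -> R: either stops
   with an output (true = accept), or queries f at a point and continues
   depending on the answer. *)
Inductive qalg (R : Type) (n : nat) : Type :=
| Done : bool -> qalg R n
| Query : 'I_n -> (R -> qalg R n) -> qalg R n.

Fixpoint run (R : Type) (n : nat) (A : qalg R n) (f : 'I_n -> R) : bool :=
  match A with
  | Done b => b
  | Query i k => run (k (f i)) f
  end.

Fixpoint nqueries (R : Type) (n : nat) (A : qalg R n) (f : 'I_n -> R) : nat :=
  match A with
  | Done _ => 0%N
  | Query i k => (nqueries (k (f i)) f).+1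
  end.

(* A randomized query algorithm: a (finitely supported) probability
   distribution over deterministic query algorithms. *)
Record rtester (R : realType) (n : nat) := RTester {
  rt_space : finType;
  rt_prob : rt_space -> R;
  rt_alg : rt_space -> qalg R n }.

Definition acc_prob (R : realType) (n : nat) (A : rtester R n) (f : 'I_n -> R) : R :=
  \sum_(w : rt_space A | run (@rt_alg _ _ A w) f) @rt_prob _ _ A w.

Definition rej_prob (R : realType) (n : nat) (A : rtester R n) (f : 'I_n -> R) : R :=
  \sum_(w : rt_space A | ~~ run (@rt_alg _ _ A w) f) @rt_prob _ _ A w.

Definition is_mono_tester (R : realType) (n : nat) (D : 'I_n -> R) (eps : R)
    (A : rtester R n) : Prop :=
  is_distr (@rt_prob _ _ A) /\
  (forall f : 'I_n -> R, monotone f -> acc_prob A f > 2%:R / 3%:R) /\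
  (forall f : 'I_n -> R, far D eps f -> rej_prob A f > 2%:R / 3%:R).

Definition query_bound (R : realType) (n : nat) (A : rtester R n) (q : R) : Prop :=
  forall (w : rt_space A) (f : 'I_n -> R), (nqueries (@rt_alg _ _ A w) f)%:R <= q.

(* Main.v *)
Require Import Defs.
From mathcomp Require Import all_boot all_order all_algebra.
From mathcomp Require Import reals.
From mathcomp Require Import ring lra zify.
Import Order.TTheory GRing.Theory Num.Theory.

Fixpoint tpath (t : btree) (v : nat) : seq nat :=
  match t with
  | Leaf => [::]
  | Node l k r => if v == k then [::]
      else k :: (if v \in keys l then tpath l v else tpath r v)
  end.

Lemma size_tpath t v : size (tpath t v) = depth t v.
Proof. elim: t => [//|l IHl k r IHr] /=; case: ifP => //= _; case: ifP => _; rewrite ?IHl ?IHr //. Qed.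

Lemma tpath_keys t v a : a \in tpath t v -> a \in keys t.
Proof.
elim: t => [//|l IHl k r IHr] /=; case: ifP => // _.
rewrite inE mem_cat inE; case/orP=> [->|]; first by rewrite orbT.
by case: ifP => _ H; [rewrite IHl | rewrite (IHr H) !orbT].
Qed.

Lemma tree_lca t u w : pairwise ltn (keys t) -> u \in keys t -> w \in keys t ->
  (u < w)%N -> exists a, [/\ (a == u) || (a \in tpath t u),
     (a == w) || (a \in tpath t w) & (u <= a <= w)%N].
Proof.
elim: t => [//|l IHl k r IHr] /=.
rewrite pairwise_cat pairwise_cons => /and4P [Hal Hpl Hak Hpr].
have Hlk x : x \in keys l -> (x < k)%N.
  by move=> Hx; move/allrelP: Hal => /(_ x k Hx); rewrite inE eqxx; apply.
have Hrk x : x \in keys r -> (k < x)%N by move=> Hx; move/allP: Hak => /(_ x Hx).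
rewrite !mem_cat !inE => Hu Hw Huw.
case: (eqVneq u k) => [Euk|Nuk].
  exists k; split.
  - by rewrite Euk eqxx.
  - by rewrite -Euk (gtn_eqF Huw) /= inE eqxx orbT.
  - by rewrite Euk leqnn -Euk ltnW.
case: (eqVneq w k) => [Ewk|Nwk].
  exists k; split.
  - by rewrite inE eqxx orbT.
  - by rewrite Ewk eqxx.
  - by rewrite Ewk leqnn -Ewk ltnW.
move: Hu Hw; rewrite (negPf Nuk) (negPf Nwk) /= => Hu Hw.
case/orP: Hu => Hu; case/orP: Hw => Hw.
- have [a [H1 H2 H3]] := IHl Hpl Hu Hw Huw.
  exists a; rewrite Hu Hw; split => //.
  + by case/orP: H1 => H1; rewrite inE H1 ?orbT.
  + by case/orP: H2 => H2; rewrite inE H2 ?orbT.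
- exists k; split.
  + by rewrite inE eqxx orbT.
  + by rewrite inE eqxx orbT.
  + by rewrite (ltnW (Hlk _ Hu)) (ltnW (Hrk _ Hw)).
- by have := ltn_trans (Hrk _ Hu) (ltn_trans Huw (Hlk _ Hw)); rewrite ltnn.
- have Hul : u \notin keys l.
    by apply/negP => /Hlk Hx; have := ltn_trans Hx (Hrk _ Hu); rewrite ltnn.
  have Hwl : w \notin keys l.
    by apply/negP => /Hlk Hx; have := ltn_trans Hx (Hrk _ Hw); rewrite ltnn.
  have [a [H1 H2 H3]] := IHr Hpr Hu Hw Huw.
  exists a; rewrite (negPf Hul) (negPf Hwl); split => //.
  + by case/orP: H1 => H1; rewrite inE H1 ?orbT.
  + by case/orP: H2 => H2; rewrite inE H2 ?orbT.
Qed.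

Set Implicit Arguments. Unset Strict Implicit. Unset Printing Implicit Defensive.
Local Open Scope ring_scope.

Definition lookup (R : realType) (n : nat) (acc : seq ('I_n * R)) (p : 'I_n) : R :=
  head 0 [seq x.2 | x <- acc & x.1 == p].

Fixpoint qlist (R : realType) (n : nat) (dec : ('I_n -> R) -> bool)
   (acc : seq ('I_n * R)) (ps : seq 'I_n) : qalg R n :=
  match ps with
  | [::] => @Done R n (dec (lookup acc))
  | p :: ps' => Query p (fun y => qlist dec ((p, y) :: acc) ps')
  end.

Lemma nq_qlist (R : realType) n dec acc ps (f : 'I_n -> R) :
  nqueries (qlist dec acc ps) f = size ps.
Proof. by elim: ps acc => [//|p ps IH] acc /=; rewrite IH. Qed.

Lemma lookup_ok (R : realType) n (acc : seq ('I_n * R)) f p :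
  (forall x, x \in acc -> x.2 = f x.1) -> p \in map fst acc -> lookup acc p = f p.
Proof.
elim: acc => [//|[q y] acc IH] Hacc /=; rewrite /lookup /=.
case: (eqVneq q p) => [<-|Nqp] /=.
  by move=> _; apply: (Hacc (q, y)); rewrite inE eqxx.
rewrite inE eq_sym (negPf Nqp) /= => Hp; apply: IH => // x Hx.
by apply: Hacc; rewrite inE Hx orbT.
Qed.

Lemma run_qlist (R : realType) n (dec : ('I_n -> R) -> bool) acc ps f (need : seq 'I_n) :
  (forall x, x \in acc -> x.2 = f x.1) ->
  (forall look, {in need, look =1 f} -> dec look = dec f) ->
  {subset need <= ps ++ map fst acc} ->
  run (qlist dec acc ps) f = dec f.
Proof.
elim: ps acc => [|p ps IH] acc Hacc Hdec Hsub /=.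
  by apply: Hdec => q /Hsub Hq; apply: lookup_ok.
apply: IH => //.
  by move=> x; rewrite inE => /orP [/eqP -> //|]; apply: Hacc.
move=> q /Hsub; rewrite /= !inE !mem_cat /= inE.
by case/orP=> [->|/orP [->|->]]; rewrite ?orbT.
Qed.


Definition goodl (R : realType) (n : nat) (T : btree) (look : 'I_n -> R) (v : 'I_n) : bool :=
  all (fun a => ((v < a)%N ==> (look v <= look (insubd v a))) &&
                ((a < v)%N ==> (look (insubd v a) <= look v))) (tpath T v).

Definition qpts (n : nat) (T : btree) (v : 'I_n) : seq 'I_n :=
  if tpath T v is [::] then [::] else v :: map (insubd v) (tpath T v).

Lemma goodl_ext (R : realType) n T (look f : 'I_n -> R) v :
  {in qpts T v, look =1 f} -> goodl T look v = goodl T f v.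
Proof.
rewrite /qpts /goodl; case E: (tpath T v) => [//|a s] H.
rewrite -E; apply: eq_in_all => b Hb.
have Hv : v \in v :: map (insubd v) (a :: s) by rewrite inE eqxx.
have Hb' : insubd v b \in v :: map (insubd v) (a :: s).
  by rewrite inE -E map_f ?orbT.
by rewrite (H _ Hv) (H _ Hb').
Qed.

Lemma mono_goodl (R : realType) n T (f : 'I_n -> R) v : monotone f -> goodl T f v.
Proof.
move=> Hf; apply/allP => a _; apply/andP; split; apply/implyP => H; apply: Hf;
  rewrite val_insubd; case: ifP => // _; exact: ltnW.
Qed.

Lemma tpath_lt n T v a : is_bst n T -> a \in tpath T v -> (a < n)%N.
Proof. by rewrite /is_bst => HT /tpath_keys; rewrite HT mem_iota. Qed.

Lemma goodl_mono (R : realType) n T (f : 'I_n -> R) u w : is_bst n T ->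
  goodl T f u -> goodl T f w -> (u < w)%N -> f u <= f w.
Proof.
move=> HT Hu Hw Huw.
have Hp : pairwise ltn (keys T) by rewrite HT -sorted_pairwise ?iota_ltn_sorted //; exact: ltn_trans.
have Hk (x : 'I_n) : val x \in keys T by rewrite HT mem_iota /=.
have [a [H1 H2 H3]] := tree_lca T u w Hp (Hk u) (Hk w) Huw.
have Hv (v : 'I_n) : a \in tpath T v -> val (insubd v a) = a.
  by move=> Ha; rewrite val_insubd (tpath_lt HT Ha).
have Gu := allP Hu a; have Gw := allP Hw a.
case: (eqVneq a u) => [Eau|Nau].
  have Aw : a \in tpath T w by move: H2; rewrite Eau (ltn_eqF Huw).
  have E : insubd w a = u by apply: val_inj; rewrite Hv.
  by move: (Gw Aw); rewrite E Eau Huw => /andP [_ /implyP]; apply.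
case: (eqVneq a w) => [Eaw|Naw].
  have Au : a \in tpath T u by move: H1; rewrite Eaw (gtn_eqF Huw).
  have E : insubd u a = w by apply: val_inj; rewrite Hv.
  by move: (Gu Au); rewrite E Eaw Huw => /andP [/implyP H _]; apply: H.
move: H1 H2; rewrite (negPf Nau) (negPf Naw) /= => Au Aw.
have E : insubd u a = insubd w a by apply: val_inj; rewrite !Hv.
case/andP: H3 => H3 H4.
have Lua : (u < a)%N by rewrite ltn_neqAle H3 andbT eq_sym.
have Law : (a < w)%N by rewrite ltn_neqAle H4 andbT.
apply: (le_trans (y := f (insubd u a))).
  by move: (Gu Au) => /andP [/implyP H _]; apply: H.
by rewrite E; move: (Gw Aw) => /andP [_ /implyP H]; apply: H.
Qed.


Lemma close_mono (R : realType) n T (f : 'I_n -> R) : is_bst n T ->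
  exists g : 'I_n -> R, monotone g /\ forall x, goodl T f x -> g x = f x.
Proof.
move=> HT.
pose m0 := \big[Num.min/0]_(y | goodl T f y) f y.
have Hm0 y : goodl T f y -> m0 <= f y.
  by move=> Hy; rewrite /m0 (bigD1 y) //= ge_min lexx.
pose g x := \big[Num.max/m0]_(y | goodl T f y && (y <= x)%N) f y.
have Hg0 x : m0 <= g x.
  apply: (big_ind (fun v => m0 <= v)) => //.
    by move=> a b Ha Hb; rewrite le_max Ha.
  by move=> y /andP [Hy _]; exact: Hm0.
have Hgy x y : goodl T f y -> (y <= x)%N -> f y <= g x.
  by move=> Hy Hyx; rewrite /g (bigD1 y) ?Hy ?Hyx //= le_max lexx.
exists g; split.
  move=> x x' Hxx'; apply: (big_ind (fun v => v <= g x')) => //.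
    by move=> a b Ha Hb; rewrite ge_max Ha Hb.
  by move=> y /andP [Hy Hyx]; apply: Hgy => //; exact: leq_trans Hyx Hxx'.
move=> x Hx; apply/eqP; rewrite eq_le Hgy ?leqnn // andbT.
apply: (big_ind (fun v => v <= f x)) => //.
- exact: Hm0.
- by move=> a b Ha Hb; rewrite ge_max Ha Hb.
move=> y /andP [Hy Hyx]; case: (ltngtP y x) Hyx => // [Hlt _|/val_inj -> _].
  exact: goodl_mono HT Hy Hx Hlt.
by [].
Qed.

Definition Dbad (R : realType) n T (D : 'I_n -> R) (f : 'I_n -> R) : R :=
  \sum_(x | ~~ goodl T f x) D x.

Lemma far_bad (R : realType) n T (D : 'I_n -> R) eps f : is_distr D -> is_bst n T ->
  far D eps f -> eps < Dbad T D f.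
Proof.
move=> [HD0 _] HT Hfar; have [g [Hg Hgf]] := close_mono f HT.
apply: (lt_le_trans (Hfar g Hg)); rewrite /disagree /Dbad.
rewrite [leLHS]big_mkcond [leRHS]big_mkcond /=; apply: ler_sum => x _.
case: ifP => Hne; case: ifP => Hb //.
by move: Hne; rewrite Hgf ?eqxx //; move/negbFE: Hb.
Qed.


Definition pts n T k (w : {ffun 'I_k -> 'I_n}) : seq 'I_n :=
  flatten [seq qpts T (w i) | i <- enum 'I_k].

Definition decw (R : realType) n T k (w : {ffun 'I_k -> 'I_n}) (look : 'I_n -> R) : bool :=
  all (fun i => goodl T look (w i)) (enum 'I_k).

Definition talg (R : realType) n T k (B : R) (w : {ffun 'I_k -> 'I_n}) : qalg R n :=
  if B < (size (pts T w))%:R then @Done R n false else qlist (decw T w) [::] (pts T w).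

Lemma size_pts n T k (w : {ffun 'I_k -> 'I_n}) :
  size (pts T w) = (\sum_i size (qpts T (w i)))%N.
Proof. by rewrite /pts size_flatten /shape -map_comp sumnE big_map big_enum. Qed.

Lemma nq_talg (R : realType) n T k (B : R) (w : {ffun 'I_k -> 'I_n}) (f : 'I_n -> R) : 0 <= B ->
  (nqueries (talg T B w) f)%:R <= B.
Proof.
move=> HB; rewrite /talg; case: ifP => //= H.
by rewrite nq_qlist leNgt H.
Qed.

Lemma run_talg (R : realType) n T k (B : R) (w : {ffun 'I_k -> 'I_n}) (f : 'I_n -> R) :
  run (talg T B w) f = ~~ (B < (size (pts T w))%:R) && decw T w f.
Proof.
rewrite /talg; case: ifP => //= _.
apply: (run_qlist (need := pts T w)) => //.
  move=> look Hl; apply: eq_in_all => i _; apply: goodl_ext => x Hx; apply: Hl.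
  by apply/flattenP; exists (qpts T (w i)) => //; apply: map_f; rewrite mem_enum.
by move=> x; rewrite cats0.
Qed.


Lemma sum_prod (R : realType) n k (F : 'I_k -> 'I_n -> R) :
  \sum_(w : {ffun 'I_k -> 'I_n}) \prod_i F i (w i) = \prod_i \sum_v F i v.
Proof. by rewrite bigA_distr_bigA. Qed.

Definition prob (R : realType) n k (D : 'I_n -> R) (w : {ffun 'I_k -> 'I_n}) : R :=
  \prod_i D (w i).

Lemma prob_distr (R : realType) n k (D : 'I_n -> R) : is_distr D ->
  is_distr (@prob R n k D).
Proof.
move=> [H0 H1]; split.
  by move=> w; apply: prodr_ge0 => i _.
by rewrite /prob (sum_prod (fun _ v => D v)) big1 // => i _; rewrite H1.
Qed.

Lemma prob_ge0 (R : realType) n k (D : 'I_n -> R) w : is_distr D -> 0 <= @prob R n k D w.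
Proof. by move=> /(prob_distr k) [H _]. Qed.

Lemma exp_cost (R : realType) n k (D : 'I_n -> R) (c : 'I_n -> nat) : is_distr D ->
  \sum_(w : {ffun 'I_k -> 'I_n}) prob D w * (\sum_i c (w i))%N%:R =
  k%:R * \sum_v D v * (c v)%:R.
Proof.
move=> [H0 H1].
under eq_bigr do rewrite natr_sum mulr_sumr.
rewrite exchange_big /=.
rewrite (eq_bigr (fun _ => \sum_v D v * (c v)%:R)); last first.
  move=> j _.
  pose F (i : 'I_k) (v : 'I_n) := D v * (if i == j then (c v)%:R else 1).
  transitivity (\sum_(w : {ffun 'I_k -> 'I_n}) \prod_i F i (w i)).
    apply: eq_bigr => w _; rewrite /F big_split /= /prob; congr (_ * _).
    by rewrite (bigD1 j) //= eqxx big1 ?mulr1 // => i /negPf ->.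
  rewrite (sum_prod F) (bigD1 j) //= [X in _ * X]big1 ?mulr1.
    by apply: eq_bigr => v _; rewrite /F eqxx.
  by move=> i /negPf Hi; rewrite -H1; apply: eq_bigr => v _; rewrite /F Hi mulr1.
by rewrite sumr_const card_ord mulr_natl.
Qed.

Lemma prod_bool (R : realType) k (b : 'I_k -> bool) :
  \prod_i ((b i)%:R : R) = (all b (enum 'I_k))%:R.
Proof.
case: (boolP (all b (enum 'I_k))) => H.
  by rewrite big1 // => i _; rewrite (allP H) ?mem_enum.
have [i _ Hi] := allPn H.
by rewrite (bigD1 i) //= (negPf Hi) mul0r.
Qed.

Lemma prob_good (R : realType) n T k (D : 'I_n -> R) (f : 'I_n -> R) :
  \sum_(w : {ffun 'I_k -> 'I_n}) prob D w * (decw T w f)%:R =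
  (\sum_v D v * (goodl T f v)%:R) ^+ k.
Proof.
pose F (i : 'I_k) (v : 'I_n) := D v * (goodl T f v)%:R.
transitivity (\sum_(w : {ffun 'I_k -> 'I_n}) \prod_i F i (w i)).
  apply: eq_bigr => w _; rewrite /F big_split /= /prob; congr (_ * _).
  by rewrite prod_bool.
by rewrite (sum_prod F) /F prodr_const card_ord.
Qed.


Lemma cost_le n T (v : 'I_n) : (size (qpts T v) <= 2 * depth T v)%N.
Proof.
rewrite /qpts -size_tpath; case: (tpath T v) => [//|a s] /=.
rewrite size_map; lia.
Qed.

Lemma Delta_ge0 (R : realType) n T (D : 'I_n -> R) : is_distr D -> 0 <= Delta T D.
Proof. by move=> [H0 _]; apply: sumr_ge0 => v _; rewrite mulr_ge0. Qed.

Lemma Ec_le (R : realType) n T (D : 'I_n -> R) : is_distr D ->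
  \sum_v D v * (size (qpts T v))%:R <= 2%:R * Delta T D.
Proof.
move=> [H0 _]; rewrite /Delta mulr_sumr; apply: ler_sum => v _.
rewrite mulrCA; apply: ler_wpM2l => //; rewrite -natrM ler_nat; exact: cost_le.
Qed.

Lemma good_split (R : realType) n T (D : 'I_n -> R) f : is_distr D ->
  \sum_v D v * (goodl T f v)%:R = 1 - Dbad T D f.
Proof.
move=> [_ H1].
have -> : \sum_v D v * (goodl T f v)%:R = \sum_(v | goodl T f v) D v.
  rewrite [RHS]big_mkcond /=; apply: eq_bigr => v _.
  by case: (goodl T f v); rewrite ?mulr1 ?mulr0.
by move: H1; rewrite (bigID (goodl T f)) /= => <-; rewrite /Dbad addrK.
Qed.

Lemma bernoulli (R : realType) (x : R) k : 0 <= x <= 1 ->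
  (1 - x) ^+ k * (1 + k%:R * x) <= 1.
Proof.
move=> /andP [H0 H1]; elim: k => [|k IH]; first by rewrite expr0 mul0r addr0 mulr1.
rewrite exprS -mulrA; apply: le_trans IH.
have Hp : 0 <= (1 - x) ^+ k by apply: exprn_ge0; rewrite subr_ge0.
rewrite -natr1.
set p := (1 - x) ^+ k; set K : R := k%:R.
have HK : 0 <= K by rewrite /K ler0n.
have Hq : 0 <= p * (x * x * (K + 1)).
  by rewrite mulr_ge0 // mulr_ge0 ?mulr_ge0 ?addr_ge0.
have -> : (1 - x) * (p * (1 + (K + 1) * x)) = p * (1 + K * x) - p * (x * x * (K + 1)).
  by ring.
by rewrite lerBlDr lerDl.
Qed.


Theorem lemma4p2 (R : realType) (n : nat) (D : 'I_n -> R) (eps : R) (T : btree) :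
  is_distr D -> 0 < eps -> is_bst n T ->
  exists A : rtester R n,
    is_mono_tester D eps A /\ query_bound A (24%:R / eps * Delta T D).
Proof.
move=> HD Heps HT.
set B := 24%:R / eps * Delta T D.
set k := Num.truncn (3%:R / eps).
have HDl0 := Delta_ge0 T HD.
have HB0 : 0 <= B by rewrite /B mulr_ge0 // divr_ge0 // ltW.
have [Hk1 Hk2] : k%:R <= 3%:R / eps /\ 3%:R / eps < k.+1%:R.
  by apply/andP; apply: truncn_itv; rewrite divr_ge0 // ltW.
have Hk1' : k%:R * eps <= 3%:R by rewrite -ler_pdivlMr.
have Hk2' : 3%:R < k%:R * eps + eps :> R.
  have E : k.+1%:R = k%:R + 1 :> R by rewrite natr1.
  by have := Hk2; rewrite ltr_pdivrMr // E mulrDl mul1r.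
pose A := @RTester R n {ffun 'I_k -> 'I_n} (prob D) (talg T B).
have Hp0 (w : {ffun 'I_k -> 'I_n}) : 0 <= prob D w := prob_ge0 w HD.
have Hsum1 : \sum_(w : {ffun 'I_k -> 'I_n}) prob D w = 1 by case: (prob_distr k HD).
have Hacc_rej f : acc_prob A f + rej_prob A f = 1.
  by rewrite /acc_prob /rej_prob -Hsum1 [RHS](bigID (fun w => run (talg T B w) f)).
exists A; split; last by move=> w f; exact: nq_talg.
split; first exact: prob_distr.
split.
- move=> f Hf.
  have Hrun w : run (talg T B w) f = ~~ (B < (size (pts T w))%:R).
    rewrite run_talg (_ : decw T w f = true) ?andbT //; apply/allP => i _; exact: mono_goodl.
  pose P := \sum_(w : {ffun 'I_k -> 'I_n} | B < (size (pts T w))%:R) prob D w.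
  have HaccP : acc_prob A f = 1 - P.
    have HS : \sum_(w : {ffun 'I_k -> 'I_n}) prob D w = P +
        \sum_(w : {ffun 'I_k -> 'I_n} | ~~ (B < (size (pts T w))%:R)) prob D w.
      exact: bigID.
    rewrite Hsum1 in HS; rewrite HS [P + _]addrC addrK /acc_prob /=; apply: eq_bigl => w; exact: Hrun.
  pose E := \sum_(w : {ffun 'I_k -> 'I_n}) prob D w * (size (pts T w))%:R.
  have HE : E <= k%:R * (2%:R * Delta T D).
    rewrite /E; under eq_bigr do rewrite size_pts.
    rewrite (exp_cost k (fun v => size (qpts T v)) HD).
    by apply: ler_wpM2l => //; exact: Ec_le.
  have HE0 : forall w : {ffun 'I_k -> 'I_n}, 0 <= prob D w * (size (pts T w))%:R.
    by move=> w; rewrite mulr_ge0.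
  have HP : P < 1 / 3%:R.
    case: (eqVneq (Delta T D) 0) => [HD0|HDn0].
      have HEz : E = 0.
        apply/eqP; rewrite eq_le sumr_ge0 ?andbT //; apply: (le_trans HE).
        by rewrite HD0 !mulr0.
      have Hz := psumr_eq0P (fun w _ => HE0 w) HEz.
      suff -> : P = 0 by lra.
      rewrite /P big1 // => w HBw.
      have HC : 0 < (size (pts T w))%:R :> R by apply: le_lt_trans HBw.
      have := Hz w isT; move/eqP; rewrite mulf_eq0 => /orP [/eqP //|/eqP HC0].
      by move: HC; rewrite HC0 ltxx.
    have HDp : 0 < Delta T D by rewrite lt_def HDn0.
    have HPB : P * B <= E.
      rewrite /P /E mulr_suml [leRHS](bigID (fun w : {ffun 'I_k -> 'I_n} => B < (size (pts T w))%:R)) /=.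
      apply: ler_wpDr; first by apply: sumr_ge0 => w _.
      by apply: ler_sum => w HBw; apply: ler_wpM2l => //; apply: ltW.
    have Hx : 0 < Delta T D / eps by rewrite divr_gt0.
    have HBx : B = 24%:R * (Delta T D / eps) by rewrite /B mulrAC mulrA.
    have H6 : k%:R * (2%:R * Delta T D) <= 6%:R * (Delta T D / eps).
      have := ler_wpM2r (x := 2%:R * Delta T D) _ Hk1.
      rewrite mulr_ge0 // => /(_ isT) H; apply: (le_trans H).
      by rewrite le_eqVlt; apply/orP; left; apply/eqP; ring.
    rewrite HBx in HPB.
    have Hfin : P * (24%:R * (Delta T D / eps)) <= 6%:R * (Delta T D / eps).
      exact: le_trans HPB (le_trans HE H6).
    move: Hfin Hx; set x := Delta T D / eps => Hfin Hx; nra.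
  rewrite HaccP; lra.
- move=> f Hfar.
  have Hbad := far_bad HD HT Hfar.
  have HG := good_split T f HD.
  have HG0 : 0 <= \sum_v D v * (goodl T f v)%:R.
    by case: HD => H0 _; apply: sumr_ge0 => v _; rewrite mulr_ge0.
  set G := \sum_v D v * (goodl T f v)%:R in HG HG0.
  have Heps1 : eps < 1 by lra.
  have Hacc : acc_prob A f <= G ^+ k.
    rewrite -(prob_good T k D f) /acc_prob /= big_mkcond /=; apply: ler_sum => w _.
    case: ifP => [|_]; last by rewrite mulr_ge0.
    by rewrite run_talg => /andP [_ ->]; rewrite mulr1.
  have HGk : G ^+ k <= (1 - eps) ^+ k.
    by apply: lerXn2r; rewrite ?nnegrE //; lra.
  have Hb : (1 - eps) ^+ k * (1 + k%:R * eps) <= 1.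
    by apply: bernoulli; rewrite !ltW.
  have Hq : 0 < (1 - eps) ^+ k by apply: exprn_gt0; rewrite subr_gt0.
  move: Hb Hq HGk; set q := (1 - eps) ^+ k => Hb Hq HGk.
  have Hq3 : q * 3%:R < q * (1 + k%:R * eps) by rewrite ltr_pM2l //; lra.
  have Hacc3 : acc_prob A f < 1 / 3%:R by lra.
  have := Hacc_rej f; lra.
Qed.
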